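(* In the unit-cost arithmetic model, given integers $n\ge1$, $k\ge0$ and $0\le i<\binom{n-1+k}{k}$, the multiset of rank $i$ among all multisets of $k$ elements from $\{0,\dots,n-1\}$ (ordered lexicographically by their non-increasing element sequences, zero-based ranks) can be computed in $O(k^2\log n)$ time.
   Context: Each multiset is represented by the sequence of its elements in non-increasing order; multisets are ordered lexicographically by these sequences, and ranks start at $0$. Arithmetic operations on integers are assumed to take constant time. *)

(* Defs.v *)
From mathcomp Require Import all_boot.
Set Implicit Arguments. Unset Strict Implicit. Unset Printing Implicit Defensive.

(* A k-multiset over {0,...,n-1} is represented by the sequence of its
   elements in non-increasing order. *)
Definition is_mset (n k : nat) (s : seq nat) : bool :=
  [&& size s == k, sorted geq s & all (fun x => x < n) s].

Fixpoint ltlex (s t : seq nat) : bool :=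
  match s, t with
  | x :: s', y :: t' => (x < y) || ((x == y) && ltlex s' t')
  | [::], _ :: _ => true
  | _, _ => false
  end.

Definition mset_of_rank (n k i : nat) (s : seq nat) : Prop :=
  is_mset n k s /\
  #|[set t : k.-tuple 'I_n | is_mset n k (map val t) && ltlex (map val t) s]| = i.

(* Registers/memory cells hold unbounded naturals; every instruction,
   including each arithmetic operation, costs one step. *)
Inductive instr : Type :=
| IConst (d c : nat)
| IAdd (d a b : nat)
| ISub (d a b : nat)
| IMul (d a b : nat)
| IDiv (d a b : nat)
| IMod (d a b : nat)
| ILoad (d a : nat)
| IStore (a s : nat)
| IJlt (a b t : nat)
| IJeq (a b t : nat)
| IJmp (t : nat)
| IHalt.

Definition mem := nat -> nat.
Definition config := (nat * mem)%type.

Definition upd (m : mem) (a v : nat) : mem := fun x => if x == a then v else m x.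

Definition fetch (P : seq instr) (pc : nat) : instr := nth IHalt P pc.

Definition step (P : seq instr) (c : config) : config :=
  let: (pc, m) := c in
  match fetch P pc with
  | IConst d v => (pc.+1, upd m d v)
  | IAdd d a b => (pc.+1, upd m d (m a + m b))
  | ISub d a b => (pc.+1, upd m d (m a - m b))
  | IMul d a b => (pc.+1, upd m d (m a * m b))
  | IDiv d a b => (pc.+1, upd m d (m a %/ m b))
  | IMod d a b => (pc.+1, upd m d (m a %% m b))
  | ILoad d a => (pc.+1, upd m d (m (m a)))
  | IStore a s => (pc.+1, upd m (m a) (m s))
  | IJlt a b t => (if m a < m b then t else pc.+1, m)
  | IJeq a b t => (if m a == m b then t else pc.+1, m)
  | IJmp t => (t, m)
  | IHalt => (pc, m)
  end.

Definition halted (P : seq instr) (c : config) : bool :=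
  if fetch P c.1 is IHalt then true else false.

Definition run (P : seq instr) (t : nat) (c : config) : config :=
  iter t (step P) c.

Definition init (n k i : nat) : config :=
  (0, fun x => if x == 0 then n else if x == 1 then k else if x == 2 then i else 0).

Definition output (k : nat) (c : config) : seq nat :=
  [seq c.2 (3 + j) | j <- iota 0 k].

(* Main.v *)
Require Import Defs.
From mathcomp Require Import all_boot zify.


Definition cnt (u m : nat) := 'C(u + m - 1, m).

Fixpoint rk (s : seq nat) : nat :=
  if s is x :: s' then cnt x (size s) + rk s' else 0.

Fixpoint msets (u m : nat) : seq (seq nat) :=
  if m is m'.+1 then flatten [seq [seq x :: t | t <- msets x.+1 m'] | x <- iota 0 u]
  else [:: [::]].

Lemma geq_trans' : transitive geq.
Proof. move=> a b c /= H1 H2; lia. Qed.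

Lemma is_mset_cons u m x t :
  is_mset u m.+1 (x :: t) = (x < u) && is_mset x.+1 m t.
Proof.
rewrite /is_mset /= eqSS (path_sortedE geq_trans').
case: (ltnP x u) => Hx /=; last first.
  by rewrite !andbF.
apply/idP/idP.
- case/and3P => -> /andP [Ha ->] Hb /=.
  by apply/allP => y Hy; have := allP Ha y Hy => /= ; rewrite ltnS.
- case/and3P => -> -> Ha; rewrite /= andbT.
  apply/andP; split; apply/allP => y Hy; have := allP Ha y Hy => /=; lia.
Qed.

Lemma mem_msets u m s : (s \in msets u m) = is_mset u m s.
Proof.
elim: m u s => [|m IH] u s.
  by case: s => [|x s] //=; rewrite /is_mset /= inE.
case: s => [|x t].
  apply/negbTE/flatten_mapP => -[y _] /mapP [z _] //.
rewrite is_mset_cons; apply/flatten_mapP/andP.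
- move=> [y]; rewrite mem_iota => Hy /mapP [z Hz [-> ->]]; split => //.
  by rewrite -IH.
- move=> [Hx Ht]; exists x; first by rewrite mem_iota.
  by apply/mapP; exists t; rewrite ?IH.
Qed.

Lemma uniq_msets u m : uniq (msets u m).
Proof.
elim: m u => [|m IH] u //=.
have: forall a, uniq (flatten [seq [seq x :: t | t <- msets x.+1 m] | x <- iota a u]).
  elim: u => [|u IHu] a //=.
  rewrite cat_uniq IHu andbT map_inj_uniq ?IH; last by move=> ? ? [].
  apply/hasPn => s /flatten_mapP [y]; rewrite mem_iota => Hy /mapP [z _ ->].
  apply/mapP => -[w _ [Hyw _]]; lia.
by apply.
Qed.

Lemma cnt_S u m : cnt u.+1 m.+1 = cnt u m.+1 + cnt u.+1 m.
Proof.
rewrite /cnt.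
have -> : u.+1 + m.+1 - 1 = (u + m).+1 by lia.
have -> : u + m.+1 - 1 = u + m by lia.
by rewrite binS; have -> : u.+1 + m - 1 = u + m by lia.
Qed.

Lemma cnt_0m m : cnt 0 m.+1 = 0.
Proof. by rewrite /cnt add0n subn1 /= bin_small. Qed.

Lemma cnt_u0 u : cnt u 0 = 1.
Proof. by rewrite /cnt bin0. Qed.

Lemma size_msets u m : size (msets u m) = cnt u m.
Proof.
elim: m u => [|m IH] u; first by rewrite cnt_u0.
rewrite /= size_flatten /shape -map_comp.
elim: u => [|u IHu]; first by rewrite cnt_0m.
rewrite -addn1 iotaD map_cat sumn_cat IHu /= size_map IH addn0 add0n addn1 cnt_S.
by [].
Qed.

Lemma count_msets u m s : is_mset u m s ->
  count (fun t => ltlex t s) (msets u m) = rk s.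
Proof.
elim: m u s => [|m IH] u s.
  by case: s => //= x s; rewrite /is_mset.
case: s => [|x s]; first by rewrite /is_mset.
rewrite is_mset_cons => /andP [Hx Hs] /=.
have E : forall a b, a + b <= u -> x < a + b ->
  sumn [seq count (fun t => ltlex t (x :: s)) [seq y :: t | t <- msets y.+1 m] | y <- iota a b]
  = (if x < a then 0 else sumn [seq cnt y.+1 m | y <- iota a (x - a)] + rk s).
  move=> a b; elim: b a => [|b IHb] a Hab Hxab; first by rewrite addn0 in Hxab; rewrite /= Hxab.
  rewrite /= count_map.
  case: (ltngtP a x) => Hax.
  - rewrite (@eq_count _ _ predT); last by move=> t /=; rewrite Hax.
    rewrite count_predT size_msets IHb; [|lia|lia].
    have -> : x - a = (x - a.+1).+1 by lia.
    by rewrite ltnNge Hax /= addnA.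
  - rewrite (@eq_count _ _ pred0); last by move=> t /=; rewrite ltnNge (ltnW Hax) gtn_eqF.
    rewrite count_pred0 add0n IHb; [|lia|lia].
    by rewrite ltnS (ltnW Hax).
  - subst a; rewrite subnn /=.
    rewrite (@eq_count _ _ (fun t => ltlex t s)); last by move=> t /=; rewrite ltnn eqxx.
    rewrite IH // add0n.
    case: b IHb Hab Hxab => [|b] IHb Hab Hxab; first by rewrite /= addn0.
    rewrite IHb ?ltnSn ?addn0 //; lia.
rewrite count_flatten -map_comp.
have E0 := E 0 u; rewrite add0n subn0 /= in E0.
rewrite (E0 (leqnn u) Hx).
congr (_ + _).
case/and3P: Hs => /eqP -> _ _.
rewrite -(size_msets x m.+1) /= size_flatten /shape -map_comp.
by congr sumn; apply: eq_map => y /=; rewrite size_map size_msets.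
Qed.

Lemma card_count (T : finType) (Q : pred T) : #|[set t | Q t]| = count Q (enum T).
Proof. rewrite cardsE cardE /enum_mem -size_filter. congr size.
by rewrite (@eq_filter _ (mem T) predT) ?filter_predT. Qed.

Lemma lemmaA n k s : 0 < n -> is_mset n k s ->
  #|[set t : k.-tuple 'I_n | is_mset n k (map val t) && ltlex (map val t) s]| = rk s.
Proof.
move=> Hn Hs.
rewrite card_count.
rewrite -(count_map (fun t : k.-tuple 'I_n => map val (tval t))
   (fun x => is_mset n k x && ltlex x s)).
set l := map _ _.
rewrite -(@count_msets n k s Hs).
have -> : count (fun x => is_mset n k x && ltlex x s) l =
          count (fun x => ltlex x s) (filter (is_mset n k) l).
  by rewrite count_filter; apply: eq_count => x /=; rewrite andbC.
apply/permP/uniq_perm.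
- rewrite filter_uniq // map_inj_uniq ?enum_uniq //.
  by move=> t1 t2 /(inj_map val_inj) /val_inj.
- exact: uniq_msets.
move=> x; rewrite mem_filter mem_msets.
case Hx: (is_mset n k x) => //=.
case/and3P: Hx => /eqP Hsz _ Hall.
pose o0 := Ordinal Hn.
have Hsz' : size (map (insubd o0) x) == k by rewrite size_map Hsz.
apply/mapP; exists (Tuple Hsz'); first by rewrite mem_enum.
rewrite /= -map_comp -[LHS]map_id; apply/esym/eq_in_map => y Hy /=.
by rewrite insubdK //; apply: (allP Hall).
Qed.


Definition prog : seq instr := [::
 IConst 15 1; IConst 16 2; IConst 24 0; IAdd 11 0 24; IAdd 12 1 24; IAdd 13 2 24;
 IConst 14 100; IAdd 14 14 1;
 (* 8 *) IJeq 12 24 37; IConst 17 0; IAdd 18 11 24; IConst 19 0;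
 (* 12 *) IAdd 23 17 15; IJeq 23 18 31; IAdd 20 17 18; IDiv 20 20 16; IConst 21 1; IConst 22 0;
 (* 18 *) IJeq 22 12 25; IAdd 22 22 15; IAdd 23 20 22; ISub 23 23 15; IMul 21 21 23; IDiv 21 21 22; IJmp 18;
 (* 25 *) IJlt 13 21 29; IAdd 17 20 24; IAdd 19 21 24; IJmp 12;
 (* 29 *) IAdd 18 20 24; IJmp 12;
 (* 31 *) IStore 14 17; ISub 13 13 19; IAdd 11 17 15; ISub 12 12 15; IAdd 14 14 15; IJmp 8;
 (* 37 *) IAdd 0 1 24; IConst 2 2; IAdd 0 0 2; IConst 2 97; IAdd 1 1 2; IAdd 1 1 0;
 (* 43 *) IConst 2 3; IJlt 0 2 51; ILoad 2 1; IStore 0 2; IConst 2 1; ISub 0 0 2; ISub 1 1 2; IJmp 43;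
 (* 51 *) IHalt].

Lemma runD t1 t2 c : run prog (t1 + t2) c = run prog t2 (run prog t1 c).
Proof. by rewrite /run addnC iterD. Qed.

Lemma runS t c : run prog t.+1 c = run prog t (step prog c).
Proof. by rewrite /run iterSr. Qed.
Lemma run0 c : run prog 0 c = c. Proof. by []. Qed.

Definition reach (c : config) (B : nat) (Q : config -> Prop) :=
  exists t, t <= B /\ Q (run prog t c).

Lemma reach_step c B Q : reach (step prog c) B Q -> reach c B.+1 Q.
Proof. by case=> t [Ht HQ]; exists t.+1; rewrite runS. Qed.

Lemma reach_now c B (Q : config -> Prop) : Q c -> reach c B Q.
Proof. by exists 0. Qed.

Lemma reach_le B' c B Q : B <= B' -> reach c B Q -> reach c B' Q.
Proof. by move=> HB [t [Ht HQ]]; exists t; split => //; apply: leq_trans HB. Qed.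

Lemma reach_mono c B (Q1 Q2 : config -> Prop) :
  (forall c, Q1 c -> Q2 c) -> reach c B Q1 -> reach c B Q2.
Proof. by move=> H [t [Ht HQ]]; exists t; split => //; apply: H. Qed.

Lemma reach_seq c B1 B2 Q1 Q : reach c B1 Q1 ->
  (forall c', Q1 c' -> reach c' B2 Q) -> reach c (B1 + B2) Q.
Proof.
move=> [t1 [H1 Q1c]] /(_ _ Q1c) [t2 [H2 Qc]]; exists (t1 + t2); split.
  by rewrite leq_add.
by rewrite runD.
Qed.

Arguments run : simpl never.
Ltac stp := apply: reach_step; rewrite /step /fetch /= ?/upd /=.

Lemma bin_loop mm md : 0 < md -> forall d s (m : Defs.mem), s + d = mm ->
  m 22 = s -> m 12 = mm -> m 15 = 1 -> m 20 = md -> m 21 = 'C(md.-1 + s, s) ->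
  reach (18, m) (7 * d).+1 (fun c => c.1 = 25 /\ c.2 21 = 'C(md.-1 + mm, mm) /\
      forall x, x \notin [:: 21; 22; 23] -> c.2 x = m x).
Proof.
move=> Hmd; elim=> [|d IH] s m Hsd H22 H12 H15 H20 H21.
  rewrite addn0 in Hsd.
  stp; rewrite H22 H12 Hsd eqxx; apply: reach_now => /=; split => //; split => //.
  by rewrite H21 Hsd.
apply: (@reach_le _ _ (7 * d).+1.+4.+3); first lia.
stp; rewrite H22 H12 (_ : (s == mm) = false); last lia.
stp; stp; stp; stp; stp; stp.
apply: reach_mono; last apply: (IH s.+1).
- move=> c [-> [-> Hfr]]; split => //; split => //.
  move=> x Hx; rewrite Hfr //.
  move: Hx; rewrite !inE; do 3 case: eqP => //.
- lia.
- by rewrite /= H22 H15 addn1.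
- by [].
- by [].
- by [].
- rewrite /= H21 H22 H20 H15.
  have -> : md + (s + 1) - 1 = (md.-1 + s).+1 by lia.
  rewrite mulnC mul_bin_diag addn1 mulKn //.
  by rewrite addnS.
Qed.

Ltac kill y := repeat (rewrite (_ : (y == _) = false); last by apply/negbTE/eqP; lia).
Ltac fr := let y := fresh "y" in move=> y; rewrite ?inE; repeat (case: eqP => [->|_] //).

Definition bsQ (u mm r : nat) (m : Defs.mem) (c : config) :=
  c.1 = 31 /\ c.2 17 < u /\ c.2 19 = cnt (c.2 17) mm /\ cnt (c.2 17) mm <= r /\
  ((c.2 17).+1 = u \/ r < cnt (c.2 17).+1 mm) /\
  forall y, y \notin [:: 17; 18; 19; 20; 21; 22; 23] -> c.2 y = m y.

Lemma bs_loop u mm r : 0 < mm -> forall e lo hi (m : Defs.mem),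
  hi - lo <= 2 ^ e -> lo < hi -> hi <= u -> cnt lo mm <= r -> (hi = u \/ r < cnt hi mm) ->
  m 15 = 1 -> m 16 = 2 -> m 24 = 0 -> m 12 = mm -> m 13 = r ->
  m 17 = lo -> m 18 = hi -> m 19 = cnt lo mm ->
  reach (12, m) (e * (7 * mm + 11) + 2) (bsQ u mm r m).
Proof.
move=> Hmm; elim=> [|e IH] lo hi m He Hlh Hhu Hlo Hhi H15 H16 H24 H12 H13 H17 H18 H19.
  have Ehi : hi = lo.+1 by rewrite expn0 in He; lia.
  rewrite {}Ehi in Hhu Hhi H18 *.
  stp; stp; rewrite H17 H15 H18 addn1 eqxx.
  apply: reach_now; rewrite /bsQ /= H17 H19.
  split; [done|split; [lia|split; [done|split; [done|split; last by fr]]]].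
  by [].
case: (eqVneq (lo + 1) hi) => [Ehi|Nhi].
  apply: (@reach_le _ _ 2); first lia.
  have {}Ehi : hi = lo.+1 by lia.
  rewrite {}Ehi in Hhu Hhi H18 *.
  stp; stp; rewrite H17 H15 H18 addn1 eqxx.
  apply: reach_now; rewrite /bsQ /= H17 H19.
  split; [done|split; [lia|split; [done|split; [done|split; last by fr]]]].
  by [].
rewrite expnS in He.
pose mid := (lo + hi) %/ 2.
have Hmid : lo < mid < hi by rewrite /mid; lia.
apply: (@reach_le _ _ ((7 * mm).+1 + (e * (7 * mm + 11) + 2).+4).+4.+2).
  rewrite mulSn; lia.
stp; stp; rewrite H17 H15 H18 (negbTE Nhi).
stp; stp; stp; stp.
apply: reach_seq; first apply: (@bin_loop mm mid _ mm 0).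
- lia.
- by [].
- by [].
- by rewrite /= H12.
- by rewrite /= H15.
- by rewrite /= H17 H18 H16.
- by rewrite /= bin0.
move=> [pc m1] /= [-> [H21' Hfr1]].
have E1 : forall y, y \notin [:: 20; 21; 22; 23] -> m1 y = m y.
  move=> y Hy; rewrite Hfr1; last by move: Hy; rewrite !inE; lia.
  by move: Hy; rewrite ?inE; repeat (case: eqP => [->|_] //).
have Ecnt : 'C(mid.-1 + mm, mm) = cnt mid mm by rewrite /cnt; congr binomial; lia.
rewrite Ecnt in H21'.
have H20' : m1 20 = mid by rewrite Hfr1 //= H17 H18 H16.
case: (ltnP r (cnt mid mm)) => Hr.
- apply: (@reach_le _ _ (e * (7 * mm + 11) + 2).+3); first lia.
  stp; rewrite E1 // H13 H21' Hr.
  stp; stp.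
  apply: reach_mono; last apply: (IH lo mid).
  + move=> c [Hc1 [Hc2 [Hc3 [Hc4 [Hc5 Hfr]]]]]; do 5 split => //.
    move=> y Hy; rewrite Hfr //; move: Hy; rewrite !inE => Hy.
    kill y; rewrite E1 // !inE; lia.
  + lia.
  + lia.
  + lia.
  + by [].
  + by right.
  + by rewrite /= E1.
  + by rewrite /= E1.
  + by rewrite /= E1.
  + by rewrite /= E1.
  + by rewrite /= E1.
  + by rewrite /= E1.
  + by rewrite /= H20' E1 // H24 addn0.
  + by rewrite /= E1.
- apply: (@reach_le _ _ (e * (7 * mm + 11) + 2).+4); first lia.
  stp; rewrite E1 // H13 H21' ltnNge Hr.
  stp; stp; stp.
  apply: reach_mono; last apply: (IH mid hi).
  + move=> c [Hc1 [Hc2 [Hc3 [Hc4 [Hc5 Hfr]]]]]; do 5 split => //.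
    move=> y Hy; rewrite Hfr //; move: Hy; rewrite !inE => Hy.
    kill y; rewrite E1 // !inE; lia.
  + lia.
  + lia.
  + lia.
  + by [].
  + by [].
  + by rewrite /= E1.
  + by rewrite /= E1.
  + by rewrite /= E1.
  + by rewrite /= E1.
  + by rewrite /= E1.
  + by rewrite /= H20' E1 // H24 addn0.
  + by rewrite /= E1.
  + by rewrite /= H21' E1 // H24 addn0.
Qed.

Definition regs := [:: 11; 12; 13; 14; 17; 18; 19; 20; 21; 22; 23].

Definition outQ k j u mm r (m : Defs.mem) (c : config) :=
  c.1 = 37 /\ (exists o, is_mset u mm o /\ rk o = r /\
     forall j', j' < mm -> c.2 (100 + k + j + j') = nth 0 o j') /\
  forall y, y < 100 + k + j -> y \notin regs -> c.2 y = m y.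

Lemma outer K e n k : n <= 2 ^ e -> forall mm u r j (m : Defs.mem),
  mm <= K -> 0 < u <= n -> r < cnt u mm ->
  m 15 = 1 -> m 16 = 2 -> m 24 = 0 -> m 12 = mm -> m 11 = u -> m 13 = r ->
  m 14 = 100 + k + j ->
  reach (8, m) (mm * (e * (7 * K + 11) + 12)).+1 (outQ k j u mm r m).
Proof.
move=> Hne; set X := e * (7 * K + 11) + 12.
elim=> [|mm IH] u r j m HK Hu Hr H15 H16 H24 H12 H11 H13 H14.
  stp; rewrite H12 H24 eqxx; apply: reach_now; split => //; split.
    exists [::]; split; first by rewrite /is_mset.
    split => //; rewrite /cnt bin0 in Hr; rewrite /=; lia.
  by [].
have HeX : e * (7 * mm.+1 + 11) <= e * (7 * K + 11) by apply: leq_mul => //; lia.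
apply: (@reach_le _ _ ((e * (7 * mm.+1 + 11) + 2) + (mm * X).+1.+4.+2).+4).
  rewrite /X mulSn; lia.
stp; rewrite H12 H24 /=.
stp; stp; stp.
apply: reach_seq; first apply: (@bs_loop u mm.+1 r _ e 0 u).
- by [].
- lia.
- lia.
- by [].
- by rewrite cnt_0m.
- by left.
- by rewrite /= H15.
- by rewrite /= H16.
- by rewrite /= H24.
- by rewrite /= H12.
- by rewrite /= H13.
- by [].
- by rewrite /= H11 H24 addn0.
- by rewrite /= cnt_0m.
move=> [pc m2] [/= -> [Hx [H19' [Hcx [Hxu Hfr2]]]]].
set x := m2 17 in Hx H19' Hcx Hxu *.
have E2 : forall y, y \notin regs -> m2 y = m y.
  move=> y Hy; rewrite Hfr2; last by move: Hy; rewrite !inE; lia.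
  by move: Hy; rewrite !inE => Hy; kill y.
apply: reach_step; rewrite /step /fetch /=.
have M14 : m2 14 = 100 + k + j by rewrite Hfr2.
have M13 : m2 13 = r by rewrite Hfr2.
have M12 : m2 12 = mm.+1 by rewrite Hfr2.
have M15 : m2 15 = 1 by rewrite Hfr2.
have M16 : m2 16 = 2 by rewrite Hfr2.
have M24 : m2 24 = 0 by rewrite Hfr2.
rewrite M14.
set A := 100 + k + j.
set m3 := upd m2 A x.
have E3 : forall y, y != A -> m3 y = m2 y by move=> y Hy; rewrite /m3 /upd (negbTE Hy).
have E3A : m3 A = x by rewrite /m3 /upd eqxx.
clearbody m3.
stp; stp; stp; stp; stp.
have E3' : forall y, y < 100 -> m3 y = m2 y by move=> y Hy; rewrite E3 // /A; apply/eqP; lia.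
apply: reach_mono; last apply: (IH x.+1 (r - cnt x mm.+1) j.+1).
- move=> c [Hc1 [[o [Ho1 [Ho2 Ho3]]] Hcfr]]; split => //; split.
    exists (x :: o); split; first by rewrite is_mset_cons Hx Ho1.
    split.
      case/and3P: Ho1 => /eqP Hso _ _.
      rewrite /= Hso Ho2; lia.
    case=> [|j'] Hj'.
      rewrite addn0 Hcfr; first last.
      + by rewrite /A !inE; lia.
      + rewrite /A; lia.
      rewrite /=; kill A; exact: E3A.
    have -> : 100 + k + j + j'.+1 = 100 + k + j.+1 + j' by lia.
    by rewrite Ho3.
  move=> y Hy Hyr; rewrite Hcfr; [|lia|done].
  move: Hyr; rewrite !inE => Hyr.
  rewrite /=; kill y.
  rewrite E3; last by rewrite /A; apply/eqP; lia.
  by apply: E2; rewrite !inE.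
- lia.
- lia.
- have := cnt_S x mm.
  case: Hxu => [Exu|Hrx]; first rewrite Exu; lia.
- by rewrite /= !E3'.
- by rewrite /= !E3'.
- by rewrite /= !E3'.
- rewrite /= !E3' // M12 M15; lia.
- rewrite /= !E3' // M15; lia.
- by rewrite /= !E3' // M13 H19'.
- rewrite /= !E3' // M14 M15; lia.
Qed.

Definition copyQ k (m0 : Defs.mem) (c : config) :=
  halted prog c /\ forall j', j' < k -> c.2 (3 + j') = m0 (100 + k + j').

Lemma copy_loop k (m0 : Defs.mem) : forall d (m : Defs.mem), d <= k ->
  m 0 = d + 2 -> m 1 = d + 2 + k + 97 ->
  (forall y, 100 + k <= y -> m y = m0 y) ->
  (forall x, d + 2 < x <= k + 2 -> m x = m0 (x + k + 97)) ->
  reach (43, m) (8 * d + 2) (copyQ k m0).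
Proof.
elim=> [|d IH] m Hd H0 H1 Hbuf Hcp.
  stp; stp; rewrite H0 /=.
  apply: reach_now; split => //= j' Hj'.
  rewrite Hcp; last lia.
  congr m0; lia.
apply: (@reach_le _ _ (8 * d + 2).+4.+4); first lia.
stp; stp; rewrite H0 (_ : d.+1 + 2 < 3 = false); last lia.
stp; rewrite H1.
apply: reach_step; rewrite /step /fetch /= H0.
set A := d.+1 + 2.
rewrite (_ : (A + k + 97 == 2) = false); last by apply/negbTE/eqP; rewrite /A; lia.
set v := m (A + k + 97).
set mb := (fun x : nat => _).
set m3 := upd mb A v.
have E3 : forall y, y != A -> m3 y = mb y.
  by move=> y Hy; rewrite /m3 /upd (negbTE Hy).
have E3A : m3 A = v by rewrite /m3 /upd eqxx.
have Hmb : forall y, y != 2 -> mb y = m y by move=> y Hy; rewrite /mb (negbTE Hy).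
clearbody m3 mb.
have E3' : forall y, y < 2 -> m3 y = m y.
  by move=> y Hy; rewrite E3 ?Hmb //; apply/eqP; [lia|rewrite /A; lia].
stp; stp; stp; stp.
apply: reach_mono; last apply: (IH _ (ltnW Hd)).
- by [].
- by rewrite /= !E3' // H0 /A; lia.
- by rewrite /= !E3' // H1 /A; lia.
- move=> y Hy /=.
  rewrite (_ : (y == 1) = false); last by apply/negbTE/eqP; lia.
  rewrite (_ : (y == 0) = false); last by apply/negbTE/eqP; lia.
  rewrite (_ : (y == 2) = false); last by apply/negbTE/eqP; lia.
  rewrite E3; last by apply/eqP; rewrite /A; lia.
  rewrite Hmb; last by apply/eqP; lia.
  by rewrite Hbuf.
- move=> x Hx /=.
  rewrite (_ : (x == 1) = false); last by apply/negbTE/eqP; lia.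
  rewrite (_ : (x == 0) = false); last by apply/negbTE/eqP; lia.
  rewrite (_ : (x == 2) = false); last by apply/negbTE/eqP; lia.
  case: (eqVneq x A) => [->|HxA].
    by rewrite E3A /v Hbuf; [congr m0|rewrite /A; lia].
  rewrite E3 // Hmb; last by apply/eqP; lia.
  rewrite Hcp //; move: HxA; rewrite /A => /eqP; lia.
Qed.

Lemma main_reach n k i : 0 < n -> i < 'C(n.-1 + k, k) ->
  let e := (trunc_log 2 n).+1 in
  reach (init n k i) (k * (e * (7 * k + 11) + 12) + 8 * k + 17)
    (fun c => halted prog c /\ mset_of_rank n k i (output k c)).
Proof.
move=> Hn Hi e.
have Hne : n <= 2 ^ e by apply: ltnW; apply: trunc_log_ltn.
set X := e * (7 * k + 11) + 12.
apply: (@reach_le _ _ ((k * X).+1 + (8 * k + 2).+4.+2).+4.+4); first lia.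
rewrite /init; stp; stp; stp; stp; stp; stp; stp; stp.
apply: reach_seq; first apply: (@outer k e n k Hne k n i 0).
- by [].
- lia.
- by rewrite /cnt; have -> : n + k - 1 = n.-1 + k by lia.
- by [].
- by rewrite /= ?addn0.
- by rewrite /= ?addn0.
- by rewrite /= ?addn0.
- by rewrite /= ?addn0.
- by rewrite /= ?addn0.
- by rewrite /= ?addn0.
move=> [pc m2] [/= -> [[o [Ho1 [Ho2 Ho3]]] Hfr]].
have M1 : m2 1 = k by rewrite Hfr //; lia.
have M24 : m2 24 = 0 by rewrite Hfr //; lia.
stp; stp; stp; stp; stp; stp.
apply: reach_mono; last apply: (@copy_loop k m2 k).
- move=> c [Hh Hc]; split => //.
  have -> : output k c = o.
    case/and3P: (Ho1) => /eqP Hso _ _.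
    rewrite -[RHS](mkseq_nth 0) Hso /output /mkseq.
    apply/eq_in_map => j'; rewrite mem_iota add0n => Hj'.
    by rewrite Hc // -Ho3 // addn0.
  split; first done.
  by rewrite lemmaA.
- by [].
- by rewrite /= M1 M24; lia.
- by rewrite /= M1 M24; lia.
- move=> y Hy /=.
  rewrite (_ : (y == 1) = false); last by apply/negbTE/eqP; lia.
  rewrite (_ : (y == 0) = false); last by apply/negbTE/eqP; lia.
  by rewrite (_ : (y == 2) = false); last by apply/negbTE/eqP; lia.
- move=> x Hx; lia.
Qed.

Lemma bound_ok k e : 0 < e ->
  k * (e * (7 * k + 11) + 12) + 8 * k + 17 <= 40 * (k ^ 2 * e).+1.
Proof.
move=> He.
have H1 : k <= k ^ 2 * e.
  case: k => [|k] //; rewrite expnS expn1 -mulnA.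
  by rewrite -[X in X <= _]muln1 leq_mul // muln_gt0 He.
have H2 : k * e <= k ^ 2 * e.
  case: k H1 => [|k] H1 //; rewrite expnS expn1 -mulnA leq_pmull //.
have E : k * (e * (7 * k + 11) + 12) = 7 * (k ^ 2 * e) + 11 * (k * e) + 12 * k.
  rewrite expnS expn1; nia.
lia.
Qed.

Theorem lemma3p3 :
  exists (P : seq instr) (C : nat),
    forall n k i : nat, 0 < n -> i < 'C(n.-1 + k, k) ->
      exists t : nat,
        t <= C * (k ^ 2 * (trunc_log 2 n).+1).+1 /\
        halted P (run P t (init n k i)) /\
        mset_of_rank n k i (output k (run P t (init n k i))).
Proof.
exists prog, 40 => n k i Hn Hi.
have [t [Ht [H1 H2]]] := @main_reach n k i Hn Hi.
exists t; split => //.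
apply: leq_trans Ht _; exact: bound_ok.
Qed.
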